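(* Let $X\in\mathbb{R}^{n\times d}$ with $X^TX$ invertible, let $y\in\{0,1\}^n$, and let $k\ge1$ be an integer. Let $g(s)=s(1-s)$, applied element-wise. For $\hat\sigma,v\in\mathbb{R}^n$ define $s^{(0)}=\hat\sigma$, $s^{(j)}=s^{(j-1)}+k^{-1}v\circ g(s^{(j-1)})$ for $j=1,\dots,k$, and $\tilde g_k(\hat\sigma,v)=k^{-1}\sum_{j=0}^{k-1}g(s^{(j)})$. Consider the iteration $$\beta_0=0,\quad \hat\sigma_0=\tfrac12\mathbf{1},\quad \Delta_t=4(X^TX)^{-1}X^T(y-\hat\sigma_t),\quad \beta_{t+1}=\beta_t+\Delta_t,\quad \hat\sigma_{t+1}=\hat\sigma_t+X\Delta_t\circ\tilde g_k(\hat\sigma_t,X\Delta_t).$$ Suppose there is $\tau<1$ such that for every $t\ge0$, $k^{-1}|X\Delta_t|\le\tau$ element-wise. Then for every $t\ge0$ every entry of $\hat\sigma_t$ lies in the open interval $(0,1)$.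
   Context: $\circ$ is the element-wise product, $|\cdot|$ of a vector is taken element-wise, and $\mathbf{1}$ is the all-ones vector. Note $\hat\sigma_{t+1}$ equals the $k$-th inner iterate $s^{(k)}$ started from $\hat\sigma_t$ with $v=X\Delta_t$, i.e. $k$ forward-Euler steps of size $k^{-1}X\Delta_t$ for the ODE $\sigma'=\sigma(1-\sigma)$. *)

(* Defs.v *)
(* R is an arbitrary realFieldType (the paper uses the reals). *)
From mathcomp Require Import all_boot all_order all_algebra.
Set Implicit Arguments. Unset Strict Implicit. Unset Printing Implicit Defensive.
Import Order.TTheory GRing.Theory Num.Theory.
Local Open Scope ring_scope.

Section Defs.
Variable R : realFieldType.

Definition gfun (s : R) : R := s * (1 - s).

Definition gvec n (s : 'cV[R]_n) : 'cV[R]_n := \col_i gfun (s i 0).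

Definition hadamard n (u v : 'cV[R]_n) : 'cV[R]_n := \col_i (u i 0 * v i 0).

Fixpoint s_iter n (k : nat) (sh v : 'cV[R]_n) (j : nat) : 'cV[R]_n :=
  match j with
  | 0 => sh
  | j'.+1 => let s := s_iter k sh v j' in
             s + (k%:R)^-1 *: hadamard v (gvec s)
  end.

Definition gtilde n (k : nat) (sh v : 'cV[R]_n) : 'cV[R]_n :=
  (k%:R)^-1 *: \sum_(j < k) gvec (s_iter k sh v j).

Definition delta n d (X : 'M[R]_(n, d)) (y sig : 'cV[R]_n) : 'cV[R]_d :=
  4%:R *: (invmx (X^T *m X) *m (X^T *m (y - sig))).

Fixpoint state n d (X : 'M[R]_(n, d)) (y : 'cV[R]_n) (k : nat) (t : nat)
  : 'cV[R]_d * 'cV[R]_n :=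
  match t with
  | 0 => (0, const_mx (2%:R)^-1)
  | t'.+1 =>
      let '(b, sig) := state X y k t' in
      let D := delta X y sig in
      (b + D, sig + hadamard (X *m D) (gtilde k sig (X *m D)))
  end.

Definition beta n d (X : 'M[R]_(n, d)) y k t := (state X y k t).1.
Definition sigma n d (X : 'M[R]_(n, d)) y k t := (state X y k t).2.
Definition Delta n d (X : 'M[R]_(n, d)) y k t := delta X y (sigma X y k t).

End Defs.

(* Main.v *)
Require Import Defs.
From mathcomp Require Import all_boot all_order all_algebra.
From mathcomp Require Import ring lra.
Import Order.TTheory GRing.Theory Num.Theory.
Local Open Scope ring_scope.

Lemma step_ok (R : realFieldType) (s c : R) :
  0 < s < 1 -> -1 < c < 1 -> 0 < s + c * (s * (1 - s)) < 1.
Proof.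
move=> /andP[s0 s1] /andP[c0 c1]; apply/andP; split.
- have h : 0 < 1 + c * (1 - s) by nra.
  have -> : s + c * (s * (1 - s)) = s * (1 + c * (1 - s)) by ring.
  exact: mulr_gt0.
- have h : 0 < 1 - c * s by nra.
  have : 0 < (1 - s) * (1 - c * s) by apply: mulr_gt0; lra.
  nra.
Qed.

Lemma s_iter_coord (R : realFieldType) n k (sh v : 'cV[R]_n) j i :
  s_iter k sh v j i 0 =
  sh i 0 + \sum_(l < j) (k%:R)^-1 * (v i 0 * gfun (s_iter k sh v l i 0)).
Proof.
elim: j => [|j IH] /=; first by rewrite big_ord0 addr0.
by rewrite big_ord_recr /= !mxE IH addrA.
Qed.

Lemma sigma_succ (R : realFieldType) n d (X : 'M[R]_(n, d)) y k t i :
  sigma X y k t.+1 i 0 =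
  s_iter k (sigma X y k t) (X *m Delta X y k t) k i 0.
Proof.
rewrite /sigma /Delta /=.
case E: (state X y k t) => [b sig] /=; rewrite /sigma E /=.
rewrite s_iter_coord /hadamard /gtilde !mxE summxE.
congr (_ + _).
rewrite mulr_sumr mulr_sumr.
apply: eq_bigr => l _; rewrite !mxE; ring.
Qed.

Theorem lemma5 (R : realFieldType) (n d : nat) (X : 'M[R]_(n, d))
  (y : 'cV[R]_n) (k : nat) (tau : R) :
  X^T *m X \in unitmx ->
  (forall i, y i 0 = 0 \/ y i 0 = 1) ->
  (1 <= k)%N ->
  tau < 1 ->
  (forall t i, (k%:R)^-1 * `|(X *m Delta X y k t) i 0| <= tau) ->
  forall t i, 0 < sigma X y k t i 0 < 1.
Proof.
move=> _ _ _ htau hb t; elim: t => [|t IH] i.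
  rewrite /sigma /= mxE; apply/andP; split; first by rewrite invr_gt0 ltr0n.
  by rewrite invf_lt1 ?ltr0n // ltr1n.
rewrite sigma_succ.
set v := X *m Delta X y k t.
have hc : -1 < (k%:R)^-1 * v i 0 < 1.
  have := hb t i; rewrite -/v => h.
  have hk : 0 <= (k%:R : R)^-1 by rewrite invr_ge0 ler0n.
  rewrite -ltr_norml normrM ger0_norm //; lra.
clearbody v.
have key : forall j, 0 < s_iter k (sigma X y k t) v j i 0 < 1.
  elim=> [|j IHj]; first exact: IH.
  have e : s_iter k (sigma X y k t) v j.+1 i 0 =
     s_iter k (sigma X y k t) v j i 0 + ((k%:R)^-1 * v i 0) *
       (s_iter k (sigma X y k t) v j i 0 * (1 - s_iter k (sigma X y k t) v j i 0)).
    by rewrite /= !mxE /gfun !mulrA.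
  by rewrite e; apply: step_ok.
exact: key.
Qed.
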